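(* Let $p$ be a prime and $f\in\mathbb{Z}_p[x]$ with $\deg f\ge 2$. If $E\subset\mathbb{Z}_p$ is a clopen $f$-invariant set such that $f:E\to E$ is minimal, then $f:E\to E$ is topologically conjugate to the adding machine $\tau:x\mapsto x+1$ on the odometer $\mathbb{Z}_{(p_s)}$, where $$(p_s)_{s\ge1}=(k,\,kd,\,kdp,\,kdp^2,\,\dots)$$ for some integers $k,d$ with $1\le k\le p$ and $d\mid (p-1)$.
   Context: For a sequence of positive integers $(p_s)_{s\ge1}$ with $p_s\mid p_{s+1}$, the odometer $\mathbb{Z}_{(p_s)}$ is the inverse limit $\varprojlim \mathbb{Z}/p_s\mathbb{Z}$ (a profinite group), and the adding machine is the map $\tau(x)=x+1$ on it. $f:E\to E$ is minimal if every orbit is dense in $E$; topological conjugacy means there is a homeomorphism $h:E\to\mathbb{Z}_{(p_s)}$ with $h\circ f=\tau\circ h$. *)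

(* Defs.v *)
From mathcomp Require Import all_boot.
Set Implicit Arguments. Unset Strict Implicit. Unset Printing Implicit Defensive.

(* A point of an inverse limit  lim Z/P_s Z  is a compatible sequence of
   residues y s in [0, P s) with  y (s+1) mod P s = y s. *)
Definition invlim (P : nat -> nat) (y : nat -> nat) : Prop :=
  forall s, y s < P s /\ y s.+1 %% P s = y s.

Definition Zp (p : nat) := invlim (fun n => p ^ n).

(* The odometer Z_(P) (assuming P s %| P s.+1) and the adding machine. *)
Definition odometer (P : nat -> nat) := invlim P.
Definition adding_machine (P : nat -> nat) (y : nat -> nat) : nat -> nat :=
  fun s => (y s + 1) %% P s.

(* Polynomials over Z_p: coefficient lists (constant term first) with
   coefficients in Z_p; evaluation computed levelwise (reduction mod p^n
   is a ring morphism Z_p -> Z/p^n). *)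
Definition Zp_poly (p : nat) (c : seq (nat -> nat)) : Prop :=
  forall i, i < size c -> Zp p (nth (fun _ => 0) c i).

Definition peval (p : nat) (c : seq (nat -> nat)) (x : nat -> nat) : nat -> nat :=
  fun n => (\sum_(i < size c) (nth (fun _ => 0) c i) n * (x n) ^ i) %% p ^ n.

Definition deg_ge2 (c : seq (nat -> nat)) : Prop :=
  2 < size c /\ exists n, (last (fun _ => 0) c) n != 0.

(* Topology: the cylinder sets {z | z s = y s} form a basis. *)
Definition open_in (P : nat -> nat) (U : (nat -> nat) -> Prop) : Prop :=
  forall x, U x -> exists n, forall z, invlim P z -> z n = x n -> U z.

Definition clopen_in (P : nat -> nat) (E : (nat -> nat) -> Prop) : Prop :=
  (forall x, E x -> invlim P x) /\
  open_in P E /\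
  open_in P (fun x => invlim P x /\ ~ E x).

Definition continuous_on (P Q : nat -> nat) (A : (nat -> nat) -> Prop)
  (h : (nat -> nat) -> (nat -> nat)) : Prop :=
  forall x, A x -> forall s, exists n, forall z, A z -> z n = x n -> h z s = h x s.

(* f : E -> E is minimal: every orbit is dense in E *)
Definition minimal_on (p : nat) (E : (nat -> nat) -> Prop)
  (f : (nat -> nat) -> (nat -> nat)) : Prop :=
  forall x y, E x -> E y -> forall n, exists m, iter m f x n = y n.

(* topological conjugacy of f : E -> E (E subset of Z_p) with the adding
   machine on the odometer Z_(P); points are compared extensionally. *)
Definition conj_to_odometer (p : nat) (E : (nat -> nat) -> Prop)
  (f : (nat -> nat) -> (nat -> nat)) (P : nat -> nat) : Prop :=
  exists (h g : (nat -> nat) -> (nat -> nat)),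
    (forall x, E x -> odometer P (h x)) /\
    (forall y, odometer P y -> E (g y)) /\
    (forall x, E x -> g (h x) =1 x) /\
    (forall y, odometer P y -> h (g y) =1 y) /\
    continuous_on (fun n => p ^ n) P E h /\
    continuous_on P (fun n => p ^ n) (odometer P) g /\
    (forall x, E x -> h (f x) =1 adding_machine P (h x)).

(* (p_s)_{s>=1} = (k, kd, kdp, kdp^2, ...), here indexed from 0. *)
Definition odo_seq (p k d : nat) (s : nat) : nat :=
  if s is s'.+1 then k * d * p ^ s' else k.

(* Main.v *)
Require Import Defs.
From mathcomp Require Import all_boot.
From mathcomp Require Import zify ring.
From mathcomp Require cyclic.
From Stdlib Require Import Classical.
Set Implicit Arguments. Unset Strict Implicit. Unset Printing Implicit Defensive.

Lemma Zp_lt p x n : Zp p x -> x n < p ^ n.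
Proof. by move=> H; case: (H n). Qed.

Lemma Zp_mod p x n m : Zp p x -> n <= m -> x m %% p ^ n = x n.
Proof.
move=> Hx; elim: m => [|m IH].
  by rewrite leqn0 => /eqP ->; rewrite modn_small //; case: (Hx 0).
rewrite leq_eqVlt => /orP [/eqP ->|Hnm]; first by rewrite modn_small //; case: (Hx m.+1).
rewrite ltnS in Hnm; case: (Hx m) => _ Hm; rewrite -(IH Hnm) -Hm.
by rewrite modn_dvdm // dvdn_exp2l.
Qed.

Definition loc (F : (nat -> nat) -> (nat -> nat)) :=
  forall z w n, z n = w n -> F z n = F w n.

Lemma iter_loc F j z w n : loc F -> z n = w n -> iter j F z n = iter j F w n.
Proof. by move=> HF H; elim: j => //= j IH; apply: HF. Qed.

Lemma iter_pow F x0 n L q : loc F -> iter L F x0 n = x0 n -> iter (q * L) F x0 n = x0 n.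
Proof.
move=> HF HL; elim: q => [|q IH] //=.
by rewrite mulSn iterD (iter_loc _ HF IH).
Qed.

Lemma iter_per F x0 n L j q : loc F -> iter L F x0 n = x0 n ->
  iter (j + q * L) F x0 n = iter j F x0 n.
Proof. by move=> HF HL; rewrite iterD; apply: iter_loc => //; apply: iter_pow. Qed.

Lemma iter_modL F x0 n L j : loc F -> iter L F x0 n = x0 n ->
  iter j F x0 n = iter (j %% L) F x0 n.
Proof. by move=> HF HL; rewrite {1}(divn_eq j L) addnC iter_per. Qed.

Definition isper F (x0 : nat -> nat) n L :=
  [/\ 0 < L, iter L F x0 n = x0 n & forall i, 0 < i < L -> iter i F x0 n <> x0 n].

Lemma iter_eq_mod F x0 n L a b : loc F -> isper F x0 n L ->
  iter a F x0 n = iter b F x0 n -> a = b %[mod L].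
Proof.
move=> HF [L0 HL Hmin].
rewrite (iter_modL a HF HL) (iter_modL b HF HL).
have ha : a %% L < L by rewrite ltn_pmod.
have hb : b %% L < L by rewrite ltn_pmod.
move: (a %% L) (b %% L) ha hb => a' b' ha hb.
wlog: a' b' ha hb / a' <= b'.
  move=> W; case: (leqP a' b') => h E; first exact: W.
  by symmetry; apply: W => //; exact: ltnW.
move=> hab E; case: (ltngtP a' b') => hlt; [|lia|by rewrite hlt].
exfalso; apply: (Hmin (L - b' + a')); first lia.
rewrite iterD (iter_loc _ HF E) -iterD subnK //; exact: ltnW.
Qed.

Lemma modn_dvdDr a b M : M %| b -> (a + b) %% M = a %% M.
Proof. by move=> H; rewrite -modnDmr (eqP H) addn0. Qed.

Lemma binom1 w q i : exists R, (w + q) ^ i = w ^ i + i * w ^ i.-1 * q + q ^ 2 * R.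
Proof.
elim: i => [|i [R IH]]; first by exists 0; rewrite !muln0 mul0n !addn0.
exists (i * w ^ i.-1 + R * (w + q)).
have H : i * w ^ i.-1 * w = i * w ^ i by case: i {IH} => //= i; rewrite expnS mulnAC mulnA.
rewrite expnSr IH /= mulSn -H [w ^ i.+1]expnSr; ring.
Qed.

Lemma modE3 a b i k p: i * a * b ^ k = i * (a %% p) * (b %% p) ^ k %[mod p].
Proof.
rewrite -modnMm -[RHS]modnMm modnXm modnMmr modnMml modnMm -[RHS]modnMml modnMmr modnMml. done.
Qed.
Lemma cong3 a a' b b' i k p: a = a' %[mod p] -> b = b' %[mod p] -> i * a * b ^ k = i * a' * b' ^ k %[mod p].
Proof. by move=> ha hb; rewrite modE3 ha hb -modE3. Qed.

Definition Dv (c : seq (nat -> nat)) (v : nat) :=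
  \sum_(i < size c) i * nth (fun _ => 0) c i 1 * v ^ i.-1.

Lemma taylor p c n w z t : prime p -> Zp_poly p c -> 0 < n -> Zp p w ->
  z n.+1 = w n.+1 + p ^ n * t %[mod p ^ n.+1] ->
  peval p c z n.+1 = peval p c w n.+1 + p ^ n * (t * Dv c (w 1)) %[mod p ^ n.+1].
Proof.
move=> pP Hc n0 Hw Hz.
rewrite /peval modn_mod -modnDml modn_mod modnDml.
have Mq : p ^ n.+1 %| (p ^ n * t) ^ 2.
  rewrite expnMn -expnM; apply: dvdn_mulr; apply: dvdn_exp2l; lia.
set C := fun i => nth (fun _ => 0) c i.
transitivity ((\sum_(i < size c) (C i n.+1 * w n.+1 ^ i + (i * C i n.+1 * w n.+1 ^ i.-1) * (p ^ n * t))) %% p ^ n.+1).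
  rewrite -modn_summ -[RHS]modn_summ; congr (_ %% _); apply: eq_bigr => i _.
  rewrite -modnMmr -modnXm Hz modnXm modnMmr.
  have [R ->] := binom1 (w n.+1) (p ^ n * t) i.
  rewrite mulnDr modn_dvdDr; last by apply: dvdn_mull; apply: dvdn_mulr.
  by rewrite /C; congr (_ %% _); ring.
rewrite big_split /= -big_distrl /= -modnDm -[RHS]modnDm; congr ((_ + _) %% _).
have -> : (\sum_(i < size c) i * C i n.+1 * w n.+1 ^ i.-1) * (p ^ n * t)
  = p ^ n * (t * \sum_(i < size c) i * C i n.+1 * w n.+1 ^ i.-1) by ring.
rewrite expnSr -!muln_modr; congr (_ * _).
rewrite -modnMmr -[RHS]modnMmr; congr ((_ * _) %% _).
rewrite /Dv -modn_summ -[RHS]modn_summ; congr (_ %% _); apply: eq_bigr => i _.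
apply: cong3.
  by rewrite /C -(@Zp_mod p _ 1 n.+1 (Hc i (ltn_ord i))) // expn1 modn_mod.
by rewrite -(@Zp_mod p w 1 n.+1 Hw) // expn1 modn_mod.
Qed.

Lemma taylor_iter p c n w z t j : prime p -> Zp_poly p c -> 0 < n ->
  (forall i, Zp p (iter i (peval p c) w)) ->
  z n.+1 = w n.+1 + p ^ n * t %[mod p ^ n.+1] ->
  iter j (peval p c) z n.+1 = iter j (peval p c) w n.+1 +
     p ^ n * (t * \prod_(0 <= i < j) Dv c (iter i (peval p c) w 1)) %[mod p ^ n.+1].
Proof.
move=> pP Hc n0 Hw Hz; elim: j => [|j IH]; first by rewrite big_nil muln1.
rewrite !iterS big_nat_recr //= !mulnA.
by have := (taylor pP Hc n0 (Hw j) IH); rewrite !mulnA.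
Qed.

Lemma dvd_pred_mod x p : 0 < x -> (p %| x.-1) = (x == 1 %[mod p]).
Proof. by move=> x0; rewrite eqn_mod_dvd // subn1. Qed.

Lemma geo_mod1 a p j : 1 < p -> a = 1 %[mod p] -> \sum_(0 <= i < j) a ^ i = j %[mod p].
Proof.
move=> p1 ha; rewrite -modn_summ.
rewrite (eq_bigr (fun _ => 1)) => [|i _]; last by rewrite -modnXm ha modnXm exp1n modn_small.
by rewrite sum_nat_const_nat muln1 subn0.
Qed.

Lemma geo_mod0 a p j : 1 < p -> p %| a -> \sum_(0 <= i < j.+1) a ^ i = 1 %[mod p].
Proof.
move=> p1 ha; rewrite big_nat_recl // expn0 -modnDmr -modn_summ.
rewrite (eq_bigr (fun _ => 0)) => [|i _]; last by rewrite expnS; apply/eqP; exact: dvdn_mulr.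
by rewrite big1_eq mod0n addn0.
Qed.

Lemma affine p a b q : prime p -> 0 < q -> p %| b * \sum_(0 <= i < q) a ^ i ->
  (forall j, 0 < j < q -> ~~ (p %| b * \sum_(0 <= i < j) a ^ i)) ->
  [\/ q = 1, q = p | [/\ q %| p.-1, a ^ q = 1 %[mod p] & a != 1 %[mod p]]].
Proof.
move=> pP q0 Hq Hmin.
have p1 := prime_gt1 pP.
case pb: (p %| b).
  apply: Or31; case: (ltngtP q 1) => // hq; first lia.
  by move: (Hmin 1); rewrite hq big_nat1 expn0 muln1 pb => /(_ isT).
have E j : (p %| b * \sum_(0 <= i < j) a ^ i) = (p %| \sum_(0 <= i < j) a ^ i).
  by rewrite Euclid_dvdM // pb.
rewrite E in Hq; have {}Hmin j : 0 < j < q -> ~~ (p %| \sum_(0 <= i < j) a ^ i).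
  by rewrite -E; exact: Hmin.
case a1: (a == 1 %[mod p]).
  have G j : (p %| \sum_(0 <= i < j) a ^ i) = (p %| j).
    by rewrite /dvdn (geo_mod1 _ p1 (eqP a1)).
  apply: Or32; rewrite G in Hq.
  have := dvdn_leq q0 Hq; case: (ltngtP p q) => // hpq _.
  by move: (Hmin p); rewrite G dvdnn prime_gt0 // hpq => /(_ isT).
case pa: (p %| a).
  move: Hq; case: q q0 {Hmin} => // q _.
  by rewrite /dvdn (geo_mod0 _ p1 pa) modn_small.
have a0 : 0 < a by rewrite lt0n; apply/negP => /eqP a0; rewrite a0 dvdn0 in pa.
have G j : (p %| \sum_(0 <= i < j) a ^ i) = (a ^ j == 1 %[mod p]).
  rewrite -dvd_pred_mod ?expn_gt0 ?a0 // predn_exp Euclid_dvdM //.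
  have -> : (p %| a.-1) = false by rewrite dvd_pred_mod // a1.
  by rewrite big_mkord.
apply: Or33; split; last by apply/negbT.
- have cop : coprime a p by rewrite coprime_sym prime_coprime // pa.
  have Eu := cyclic.Euler_exp_totient cop; rewrite totient_prime // in Eu.
  rewrite /dvdn; apply/eqP.
  have Hq' : a ^ q = 1 %[mod p] by apply/eqP; rewrite -G.
  have Hr : a ^ (p.-1 %% q) = 1 %[mod p].
    rewrite -Eu [in RHS](divn_eq p.-1 q) (mulnC (p.-1 %/ q)) expnD expnM -modnMml.
    have -> : (a ^ q) ^ (p.-1 %/ q) %% p = 1 %% p by rewrite -modnXm Hq' modnXm exp1n.
    by rewrite modnMml mul1n.
  case: (posnP (p.-1 %% q)) => // hr.
  have hj : 0 < p.-1 %% q < q by rewrite hr ltn_pmod.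
  by move: (Hmin _ hj); rewrite G Hr eqxx.
- by apply/eqP; rewrite -G.
Qed.

Lemma red p z w n m : Zp p z -> Zp p w -> n <= m -> z m = w m -> z n = w n.
Proof. by move=> Hz Hw nm H; rewrite -(Zp_mod Hz nm) -(Zp_mod Hw nm) H. Qed.

Lemma cong_dvd d m a b : d %| m -> a = b %[mod m] -> a = b %[mod d].
Proof. by move=> H E; rewrite -(modn_dvdm a H) E modn_dvdm. Qed.

Lemma prod_per K M (G : nat -> nat) : (forall i, G (i + K) = G i) ->
  \prod_(0 <= i < K * M) G i = (\prod_(0 <= i < K) G i) ^ M.
Proof.
move=> HG.
have HG' : forall M i, G (i + K * M) = G i.
  elim=> [|m IH] i; first by rewrite muln0 addn0.
  by rewrite mulnS addnA IH HG.
elim: M => [|M IH]; first by rewrite muln0 big_geq.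
rewrite mulnS addnC (@big_cat_nat _ _ _ (K * M)) //=; last exact: leq_addr.
rewrite IH expnS mulnC; congr (_ * _).
rewrite -{1}(add0n (K * M)) big_addn addKn.
by apply: eq_bigr => i _; rewrite HG'.
Qed.

Lemma surj_le q p (f : nat -> nat) : (forall t, t < p -> exists j, j < q /\ f j = t) -> p <= q.
Proof.
move=> H.
have : size (iota 0 p) <= size (map f (iota 0 q)).
  apply: uniq_leq_size; first exact: iota_uniq.
  move=> t; rewrite mem_iota add0n => /andP [_ /H [j [jq <-]]].
  by apply: map_f; rewrite mem_iota.
by rewrite size_map !size_iota.
Qed.

Lemma digit p z w n : 0 < p -> Zp p z -> Zp p w -> z n = w n ->
  exists t, z n.+1 = w n.+1 + p ^ n * t %[mod p ^ n.+1].
Proof.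
move=> p0 Hz Hw H.
have Hm : z n.+1 = w n.+1 %[mod p ^ n].
  by rewrite (Zp_mod Hz (leqnSn n)) (Zp_mod Hw (leqnSn n)).
have zl := Zp_lt n.+1 Hz; have wl := Zp_lt n.+1 Hw.
rewrite expnSr in zl wl *.
have pn0 : 0 < p ^ n by rewrite expn_gt0 p0.
case: (leqP (w n.+1) (z n.+1)) => hzw.
  move: Hm; move/eqP; rewrite eqn_mod_dvd // => /dvdnP [t Ht].
  by exists t; congr (_ %% _); lia.
move: Hm; move/esym/eqP; rewrite eqn_mod_dvd; last exact: ltnW.
move=> /dvdnP [s Hs].
have sp : s < p.
  by rewrite -(ltn_pmul2r pn0) -Hs mulnC; lia.
exists (p - s).
rewrite -(modnDr (z n.+1)) (mulnC (p ^ n) p).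
congr (_ %% _).
rewrite mulnBr.
have : s * p ^ n <= p ^ n * p by rewrite mulnC leq_mul2l ltnW ?orbT.
lia.
Qed.

Theorem theoremC (p : nat) (c : seq (nat -> nat)) (E : (nat -> nat) -> Prop) :
  prime p ->
  Zp_poly p c -> deg_ge2 c ->
  clopen_in (fun n => p ^ n) E ->
  (exists x, E x) ->
  (forall x, E x -> E (peval p c x)) ->
  minimal_on p E (peval p c) ->
  exists k d : nat,
    [/\ 1 <= k <= p, d %| p.-1 & conj_to_odometer p E (peval p c) (odo_seq p k d)].
Proof.
move=> pP Hc _ [HEZ [Hopen Hcl]] [x0 Ex0] Hinv Hmin.
set F := peval p c.
have p1 := prime_gt1 pP; have p0 := prime_gt0 pP.
have locF : loc F by move=> z w n H; rewrite /F /peval H.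
have Eit : forall j x, E x -> E (iter j F x).
  by move=> j x Ex; elim: j => //= j IH; apply: Hinv.
have Zit : forall j, Zp p (iter j F x0) by move=> j; apply: HEZ; apply: Eit.
have Hex : forall n, exists L, (0 < L) && (iter L F x0 n == x0 n).
  move=> n; have [m Hm] := Hmin _ _ (Hinv _ Ex0) Ex0 n.
  by exists m.+1; rewrite iterSr Hm eqxx.
pose L n := ex_minn (Hex n).
have Lper : forall n, isper F x0 n (L n).
  move=> n; rewrite /L; case: ex_minnP => l /andP [l0 /eqP Hl] Hml; split => //.
  move=> i /andP [i0 il] Hi; have := Hml i; rewrite i0 Hi eqxx => /(_ isT); lia.
have L0 : forall n, 0 < L n by move=> n; case: (Lper n).
have LP : forall n, iter (L n) F x0 n = x0 n by move=> n; case: (Lper n).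
have Lcong : forall n a b, iter a F x0 n = iter b F x0 n -> a = b %[mod L n].
  by move=> n a b; apply: iter_eq_mod.
have Liter : forall n a b, a = b %[mod L n] -> iter a F x0 n = iter b F x0 n.
  by move=> n a b H; rewrite (iter_modL a locF (LP n)) (iter_modL b locF (LP n)) H.
have Ldvd : forall n j, iter j F x0 n = x0 n -> L n %| j.
  by move=> n j H; rewrite /dvdn; apply/eqP; rewrite (Lcong n j 0 H) mod0n.
have LdS : forall n, L n %| L n.+1.
  move=> n; apply: Ldvd; apply: (@red p _ _ n n.+1 (Zit _) (Zit 0)) => //; exact: LP.
have Ldle : forall n m, n <= m -> L n %| L m.
  move=> n m /subnK <-; elim: (m - n) => [|i IH] //.
  by rewrite addSn; apply: dvdn_trans (LdS _).
have Zx0 : Zp p x0 by apply: HEZ.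
have ExE : forall x n, E x -> exists j, iter j F x0 n = x n.
  by move=> x n Ex; apply: Hmin.
pose idx n (x : nat -> nat) := find (fun j => iter j F x0 n == x n) (iota 0 (L n)).
have idxP : forall n x, (exists j, iter j F x0 n = x n) ->
    idx n x < L n /\ iter (idx n x) F x0 n = x n.
  move=> n x [j Hj].
  have hs : has (fun j => iter j F x0 n == x n) (iota 0 (L n)).
    apply/hasP; exists (j %% L n); first by rewrite mem_iota add0n ltn_pmod.
    by rewrite -(iter_modL j locF (LP n)) Hj.
  have hl : idx n x < L n by move: hs; rewrite has_find size_iota.
  split => //; have := nth_find 0 hs; rewrite nth_iota // add0n; by move/eqP.
have idxC : forall n x a, iter a F x0 n = x n -> a = idx n x %[mod L n].
  move=> n x a Ha; apply: Lcong; rewrite Ha; symmetry; exact: (idxP n x (ex_intro _ a Ha)).2.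
pose A n := \prod_(0 <= i < L n) Dv c (iter i F x0 1).
have step : forall n, 0 < n -> exists q, [/\ L n.+1 = L n * q,
   [\/ q = 1, q = p | [/\ q %| p.-1, A n ^ q = 1 %[mod p] & A n != 1 %[mod p]]] &
   ((forall t, t < p -> exists J, iter J F x0 n.+1 = (x0 n.+1 + p ^ n * t) %% p ^ n.+1) -> p <= q)].
  move=> n n0.
  have [b Hb] := digit p0 (Zit (L n)) Zx0 (LP n).
  pose q := L n.+1 %/ L n.
  have Lq : L n.+1 = L n * q by rewrite /q mulnC divnK.
  have q0 : 0 < q by move: (L0 n.+1); rewrite Lq muln_gt0 => /andP [].
  have orb : forall j, iter (j * L n) F x0 n.+1 =
      x0 n.+1 + p ^ n * (b * \sum_(0 <= i < j) A n ^ i) %[mod p ^ n.+1].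
    elim=> [|j IH]; first by rewrite big_geq // mul0n !muln0 addn0.
    rewrite mulSn iterD.
    have -> := taylor_iter (L n) pP Hc n0 Zit IH.
    rewrite -modnDml Hb modnDml; congr (_ %% _).
    have -> : \sum_(0 <= i < j.+1) A n ^ i = 1 + A n * \sum_(0 <= i < j) A n ^ i.
      rewrite big_nat_recl // expn0 big_distrr /=; congr (_ + _).
      by apply: eq_bigr => i _; rewrite expnS.
    ring.
  have pn : (p ^ n == 0) = false by rewrite expn_eq0 eqn0Ngt p0.
  have equiv1 : forall j, (iter (j * L n) F x0 n.+1 = x0 n.+1) <->
      p %| b * \sum_(0 <= i < j) A n ^ i.
    move=> j; split => H.
    - move: (orb j); rewrite H -{1}(addn0 (x0 n.+1)) => /eqP.
      by rewrite eqn_modDl mod0n expnSr -muln_modr eq_sym muln_eq0 pn.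
    - rewrite -(modn_small (Zp_lt n.+1 (Zit _))) -[RHS](modn_small (Zp_lt n.+1 Zx0)).
      by rewrite orb modn_dvdDr // expnSr dvdn_pmul2l // expn_gt0 p0.
  have equiv2 : forall j, (iter (j * L n) F x0 n.+1 = x0 n.+1) <-> q %| j.
    move=> j; split.
    - by move/Ldvd; rewrite Lq (mulnC (L n)) dvdn_pmul2r.
    - move/dvdnP => [r ->]; rewrite -mulnA (mulnC q) -Lq; exact: (iter_pow r locF (LP n.+1)).
  exists q; split => //.
  - apply: (affine pP q0).
      by apply: (equiv1 q).1; apply: (equiv2 q).2.
    move=> j /andP [j0 jq]; apply/negP => H.
    have := dvdn_leq j0 ((equiv2 j).1 ((equiv1 j).2 H)); lia.
  - move=> Hsurj; apply: (@surj_le q p (fun j => (b * \sum_(0 <= i < j) A n ^ i) %% p)).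
    move=> t tp; have [J HJ] := Hsurj t tp.
    have HJn : iter J F x0 n = x0 n.
      rewrite -(Zp_mod (Zit J) (leqnSn n)) HJ modn_dvdm ?dvdn_exp2l //.
      by rewrite addnC mulnC modnMDl (Zp_mod Zx0 (leqnSn n)).
    have [J' HJ'] := dvdnP (Ldvd _ _ HJn).
    exists (J' %% q); split; first by rewrite ltn_pmod.
    have E1 : iter ((J' %% q) * L n) F x0 n.+1 = iter J F x0 n.+1.
      by apply: Liter; rewrite HJ' muln_modl Lq (mulnC q) modn_mod.
    move: (orb (J' %% q)); rewrite E1 HJ modn_mod => /eqP.
    rewrite eqn_modDl expnSr -!muln_modr => /eqP /eqP.
    by rewrite eqn_pmul2l ?expn_gt0 ?p0 // (modn_small tp) => /eqP.
have Gper : forall i, Dv c (iter (i + L 1) F x0 1) = Dv c (iter i F x0 1).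
  move=> i; congr (Dv c _); have := iter_per i 1 locF (LP 1); by rewrite mul1n.
have Aper : forall n M, L n = L 1 * M -> A n = A 1 ^ M.
  by move=> n M H; rewrite /A H prod_per.
have inv : forall n, 0 < n -> exists d e, [/\ L n = L 1 * (d * p ^ e), d %| p.-1 &
    (d = 1 \/ A 1 ^ (d * p ^ e) = 1 %[mod p])].
  elim=> // n IH _; case: (posnP n) => [-> | n0].
    by exists 1, 0; rewrite muln1 dvd1n; split => //; left.
  have [d [e [HL Hd Ho]]] := IH n0; have [q [Lq Htri _]] := step n n0.
  have An : A n = A 1 ^ (d * p ^ e) by apply: Aper.
  case: Htri => [q1 | qp | [qd Haq Ha1]].
  - by exists d, e; rewrite Lq q1 muln1 HL.
  - exists d, e.+1; split => //; first by rewrite Lq qp HL expnSr !mulnA.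
    case: Ho => [-> | Ho]; [by left | right].
    by rewrite expnSr mulnA expnM -modnXm Ho modnXm exp1n.
  - have d1 : d = 1.
      case: Ho => // Ho; move: Ha1; rewrite An.
      by move/eqP: Ho => ->.
    subst d; exists q, e; split => //; first by rewrite Lq HL mul1n; ring.
    by right; rewrite mulnC expnM -(mul1n (p ^ e)) -An.
have kp : L 1 <= p.
  have : size (map (fun j => iter j F x0 1) (iota 0 (L 1))) <= size (iota 0 p).
    apply: uniq_leq_size.
    - rewrite map_inj_in_uniq ?iota_uniq // => i j.
      rewrite !mem_iota !add0n => /andP[_ hi] /andP [_ hj] H.
      by move: (Lcong 1 i j H); rewrite !modn_small.
    - move=> v /mapP [j _ ->]; rewrite mem_iota add0n /=.
      by have := Zp_lt 1 (Zit j); rewrite expn1.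
  by rewrite size_map !size_iota.
have [N HN] := Hopen x0 Ex0.
have grow : forall n, N < n -> L n.+1 = L n * p.
  move=> n Nn; have n0 : 0 < n by lia.
  have [q [Lq Htri Hs]] := step n n0.
  have pq : p <= q.
    apply: Hs => t tp.
    pose z := fun m => (x0 m + (if n < m then p ^ n * t else 0)) %% p ^ m.
    have Zz : Zp p z.
      move=> m; split; first by rewrite /z ltn_pmod // expn_gt0 p0.
      rewrite /z modn_dvdm ?dvdn_exp2l //.
      case: (ltngtP n m) => h.
      + rewrite (_ : n < m.+1 = true); last by lia.
        by rewrite -modnDml (Zp_mod Zx0 (leqnSn m)).
      + rewrite (_ : n < m.+1 = false); last by lia.
        by rewrite !addn0 (Zp_mod Zx0 (leqnSn m)) modn_small // Zp_lt.
      + subst m; rewrite ltnSn addn0 addnC mulnC modnMDl (Zp_mod Zx0 (leqnSn n)).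
        by rewrite modn_small // Zp_lt.
    have Ez : E z.
      apply: HN => //; rewrite /z (_ : n < N = false); last by lia.
      by rewrite addn0 modn_small // Zp_lt.
    have [J HJ] := Hmin _ _ Ex0 Ez n.+1.
    by exists J; rewrite HJ /z ltnSn.
  case: Htri => [q1 | qp | [qd _ _]]; [by rewrite q1 in pq; lia | by rewrite Lq qp | ].
  have := dvdn_leq _ qd; lia.
pose N' := N.+1.
have [d [e [HLN Hd _]]] := inv N' (ltn0Sn N).
have LN : forall i, L (N' + i) = L N' * p ^ i.
  elim=> [|i IH]; first by rewrite addn0 muln1.
  by rewrite addnS grow; [rewrite IH expnSr mulnA | lia].
exists (L 1), d; split => //; first by rewrite L0 kp.
pose P := odo_seq p (L 1) d.
have d0 : 0 < d.
  rewrite lt0n; apply/negP => /eqP dd; move: Hd; rewrite dd dvd0n; lia.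
have P0 : forall s, 0 < P s.
  by case=> [|s]; rewrite /P /= ?muln_gt0 ?L0 ?d0 ?expn_gt0 ?p0.
have PS : forall s, P s %| P s.+1.
  case=> [|s]; rewrite /P /=; first by rewrite -mulnA dvdn_mulr.
  by apply: dvdn_mul (dvdnn _) _; apply: dvdn_exp2l.
have Ple : forall s t, s <= t -> P s %| P t.
  move=> s t /subnK <-; elim: (t - s) => [|i IH] //.
  by rewrite addSn; apply: dvdn_trans (PS _).
have PL : forall s, P s %| L (N' + s).
  case=> [|s]; rewrite LN HLN /P /=; first by rewrite -mulnA dvdn_mulr.
  by apply/dvdnP; exists (p ^ e * p); rewrite expnS; ring.
have LP' : forall n, L n %| P (e + n).+1.
  move=> n; rewrite /P /=; case: (leqP n N') => h.
    apply: dvdn_trans (Ldle _ _ h) _; rewrite HLN.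
    by apply/dvdnP; exists (p ^ n); rewrite expnD; ring.
  have [i ->] : exists i, n = N' + i by exists (n - N'); lia.
  by rewrite LN HLN; apply/dvdnP; exists (p ^ N'); rewrite !expnD; ring.
have odo_mod : forall y, odometer P y -> forall s t, s <= t -> y t %% P s = y s.
  move=> y Hy s t /subnK <-; elim: (t - s) => [|i IH].
    by rewrite add0n modn_small //; case: (Hy s).
  rewrite addSn -(modn_dvdm (y _) (Ple s (i + s) (leq_addl _ _))).
  by case: (Hy (i + s)) => _ ->.
have idxL : forall x n m, E x -> n <= m -> idx m x = idx n x %[mod L n].
  move=> x n m Ex nm; apply: idxC; have [_ Hm] := idxP m x (ExE x m Ex).
  exact: (red (Zit _) (HEZ _ Ex) nm Hm).
pose h := fun x : nat -> nat => fun s => idx (N' + s) x %% P s.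
pose g := fun y : nat -> nat => fun n => iter (y (e + n).+1) F x0 n.
exists h, g.
refine (conj _ (conj _ (conj _ (conj _ (conj _ (conj _ _)))))).
- move=> x Ex s; split; first by rewrite ltn_pmod.
  rewrite /h modn_dvdm ?PS //; apply: (cong_dvd (PL s)).
  by rewrite addnS; apply: idxL => //; exact: leqnSn.
- move=> y Hy.
  have Zg : Zp p (g y).
    move=> n; split; first exact: Zp_lt n (Zit _).
    rewrite /g (Zp_mod (Zit _) (leqnSn n)); apply: Liter.
    rewrite addnS; apply: (cong_dvd (LP' n)).
    by rewrite (proj2 (Hy _)) modn_small //; case: (Hy (e + n).+1).
  case: (classic (E (g y))) => // nE.
  have [n Hn] := Hcl (g y) (conj Zg nE).
  have [_ []] := Hn (iter (y (e + n).+1) F x0) (Zit _) (erefl _).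
  exact: Eit.
- move=> x Ex n; rewrite /g /h.
  have [_ HM] := idxP (N' + (e + n).+1) x (ExE x _ Ex).
  rewrite -(red (Zit _) (HEZ _ Ex) (_ : n <= N' + (e + n).+1) HM); last by lia.
  by apply: Liter; apply: (cong_dvd (LP' n)); rewrite modn_mod.
- move=> y Hy s; rewrite /h.
  have Hgy : iter (y (e + (N' + s)).+1) F x0 (N' + s) = g y (N' + s) by [].
  have := cong_dvd (PL s) (idxC _ _ _ Hgy) => <-.
  by apply: odo_mod => //; lia.
- by move=> x Ex s; exists (N' + s) => z Ez Hz; rewrite /h /idx Hz.
- by move=> y Hy n; exists (e + n).+1 => z Hz Hzy; rewrite /g Hzy.
- move=> x Ex s; rewrite /h /adding_machine modnDml.
  apply: (cong_dvd (PL s)); symmetry; apply: idxC.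
  rewrite addn1 iterS; apply: locF; exact: (idxP _ x (ExE x _ Ex)).2.
Qed.
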